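(* Let $n>k\geq1$, $r=n-k$, and let $h,d$ be integers with $2\leq h\leq n-k$, $k<d\leq n-h$, $(d-k)\mid h$ and $(\frac{h}{d-k}+1)\mid 2^n$. Put $\delta=d-k$, $N=h/\delta$ (so $N=2^w-1$ for some integer $w\geq1$) and $\ell=2^n$. Let $F$ be a finite field with $|F|>2n$ and $\lambda_{j,0},\lambda_{j,1}$, $j\in[n]$, be $2n$ distinct elements of $F$, and let $\mathcal{C}$ be the (Hadamard MSR) code of all $(\bm c_1,\ldots,\bm c_n)$, $\bm c_j=(c_{j,0},\ldots,c_{j,\ell-1})\in F^\ell$, with $\sum_{j\in[n]}\lambda_{j,a_j}^{t-1}c_{j,a}=0$ for all $a\in[0,\ell-1]$, $t\in[r]$. Let $\mathcal{H}\subseteq[n]$ with $|\mathcal{H}|=h$ be the set of failed nodes and $\mathcal{R}\subseteq[n]\setminus\mathcal{H}$ with $|\mathcal{R}|=d$ the helper nodes. Partition $\mathcal{H}$ into disjoint sets $P_1,\ldots,P_N$ of size $\delta$, pick $m_i\in P_i$ for each $i\in[N]$, let $M=(m_1,\ldots,m_N)$, and let $V_0\subseteq\mathbb{F}_2^N$ be the binary Hamming code of length $N$ (dimension $N-w$, minimum distance $3$). Then every codeword's $\bm c_j$, $j\in\mathcal{H}$, can be recovered from the symbols $$\Big\{\sum_{v\in\{0,1\}}c_{j,\,a(P_i,a|_{P_i}\oplus v\bm 1_\delta)}:\ a\in[0,\ell-1]\text{ with }a|_M\in V_0,\ i\in[N]\Big\}$$ downloaded from each helper node $j\in\mathcal{R}$;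 this amounts to $\frac{h\ell}{d-k+h}$ symbols per helper node and total repair bandwidth $\frac{dh\ell}{d-k+h}$, achieving the cut-set bound. In particular $\mathcal{C}$ has the $(h,d)$-optimal repair property.
   Context: Each $a\in[0,2^n-1]$ is identified with its binary expansion $(a_1,\ldots,a_n)\in\{0,1\}^n$, $a=\sum_i a_i2^{i-1}$. For $\mathcal{X}\subseteq[n]$, $a|_{\mathcal{X}}$ is the vector of bits $(a_x)_{x\in\mathcal{X}}$ (for $M=(m_1,\ldots,m_N)$, $a|_M=(a_{m_1},\ldots,a_{m_N})\in\mathbb{F}_2^N$), and $a(\mathcal{X},\bm v)$ is the integer whose bits on $\mathcal{X}$ equal $\bm v$ and whose other bits equal those of $a$; $\oplus$ is bitwise addition mod 2 and $\bm 1_\delta$ is the all-one vector of length $\delta$. The binary Hamming code of length $N=2^w-1$ is the kernel of the $w\times N$ binary matrix whose columns are all nonzero vectors of $\mathbb{F}_2^w$. The cut-set bound for repairing $h$ nodes from $d$ helpers in an $(n,k,\ell)$ MDS array code is that each helper must send at least $\frac{h\ell}{d-k+h}$ symbols; the $(h,d)$-optimal repair property means that for every $h$-set $\mathcal{H}$ and every $d$-set $\mathcal{R}\subseteq[n]\setminus\mathcal{H}$ the failed nodes can be recovered with each helper sending exactly $\frac{h\ell}{d-k+h}$ symbols computed from its own content. *)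

(* Defs.v *)
From mathcomp Require Import all_boot all_algebra.
Set Implicit Arguments. Unset Strict Implicit. Unset Printing Implicit Defensive.
Import GRing.Theory.
Local Open Scope ring_scope.

(* Coordinate indices a in [0, 2^n - 1] are represented directly by their
   binary expansions (a_1,...,a_n), i.e. by elements of {ffun 'I_n -> bool};
   bit a_{j+1} is  a j  for j : 'I_n. *)

(* w such that N = 2^w - 1 (when N+1 is a power of 2). *)
Definition hamming_w (N : nat) : nat := trunc_log 2 N.+1.

(* Binary Hamming code of length N: kernel (over F_2, with xor as addition)
   of the w x N parity-check matrix whose column i (i = 0..N-1) is the binary
   expansion of i+1, i.e. the columns are all nonzero vectors of F_2^w. *)
Definition hamming_code (N : nat) (v : 'I_N -> bool) : bool :=
  [forall s : 'I_(hamming_w N),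
     ~~ \big[addb/false]_(i < N) (v i && odd (i.+1 %/ 2 ^ s))].

(* a(X, a|_X (+) 1_{|X|}) : flip the bits of a on X *)
Definition flip (n : nat) (a : {ffun 'I_n -> bool}) (X : {set 'I_n})
  : {ffun 'I_n -> bool} := [ffun j => a j (+) (j \in X)].

(* Hadamard MSR code: c j a = c_{j,a}; parity checks for t = 1..r
   (exponents 0..r-1), r = n - k. *)
Definition in_hadamard_code (n k : nat) (F : fieldType)
  (lam : 'I_n -> bool -> F) (c : 'I_n -> {ffun 'I_n -> bool} -> F) : Prop :=
  forall (a : {ffun 'I_n -> bool}) (t : 'I_(n - k)),
    \sum_(j < n) (lam j (a j)) ^+ t * c j a = 0.

(* Main.v *)
Require Import Defs.
From mathcomp Require Import all_boot all_algebra.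
From mathcomp Require Import zify.
Set Implicit Arguments. Unset Strict Implicit. Unset Printing Implicit Defensive.
Import GRing.Theory.
Local Open Scope ring_scope.


Lemma vand (F : fieldType) (T : finType) (mu : T -> F) (S : {set T}) (r : nat) (y : T -> F) :
  injective mu -> (#|S| <= r)%N -> (forall p, p \notin S -> y p = 0) ->
  (forall t, (t < r)%N -> \sum_p mu p ^+ t * y p = 0) -> forall p, y p = 0.
Proof.
move=> muI cS yS eq p0.
case: (boolP (p0 \in S)) => [p0S|]; last exact: yS.
pose s := [seq mu x | x in S :\ p0].
pose q := \prod_(z <- s) ('X - z%:P).
have sq : size q = #|S :\ p0|.+1 by rewrite size_prod_XsubC size_map -cardE.
have sqr : (size q <= r)%N.
  by rewrite sq; move: cS; rewrite (cardsD1 p0 S) p0S.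
have key : \sum_p q.[mu p] * y p = 0.
  under eq_bigr => p _ do rewrite horner_coef big_distrl /=.
  rewrite exchange_big /= big1 // => t _.
  under eq_bigr => p _ do rewrite -mulrA.
  rewrite -big_distrr /= eq ?mulr0 //.
  exact: leq_trans (ltn_ord t) sqr.
have : \sum_p q.[mu p] * y p = q.[mu p0] * y p0.
  rewrite (bigD1 p0) //= big1 ?addr0 // => p pp0.
  case: (boolP (p \in S)) => pS; last by rewrite yS ?mulr0.
  have : root q (mu p) by rewrite root_prod_XsubC image_f // in_setD1 pp0 pS.
  by move/rootP->; rewrite mul0r.
rewrite key => /esym/eqP; rewrite mulf_eq0 => /orP[|/eqP//].
rewrite -/(root q _) root_prod_XsubC => /imageP[x].
by rewrite in_setD1 => /andP[/eqP xp0 _] /muI/esym.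
Qed.


Local Close Scope ring_scope.

Lemma bits_sum (w x : nat) : x < 2 ^ w -> x = \sum_(s < w) odd (x %/ 2 ^ s) * 2 ^ s.
Proof.
elim: w x => [|w IH] x hx.
  by rewrite big_ord0; move: hx; rewrite expn0; case: x.
rewrite big_ord_recl /= expn0 divn1 muln1.
have hx2 : x %/ 2 < 2 ^ w by rewrite ltn_divLR // mulnC -expnS.
under eq_bigr => s _ do rewrite /bump /= add1n expnS divnMA (mulnC 2) mulnA.
rewrite -big_distrl /= -(IH _ hx2) divn2.
by rewrite -[in LHS](odd_double_half x) -muln2 addnC.
Qed.

Section Ham.
Variable N : nat.
Let W := hamming_w N.
Hypothesis HW : N.+1 = 2 ^ W.

Definition col (i : 'I_N) : {ffun 'I_W -> bool} := [ffun s : 'I_W => odd (i.+1 %/ 2 ^ s)].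
Definition syn (b : 'I_N -> bool) : {ffun 'I_W -> bool} :=
  [ffun s : 'I_W => \big[addb/false]_(i < N) (b i && col i s)].
Definition zv : {ffun 'I_W -> bool} := [ffun => false].
Definition toggle (b : 'I_N -> bool) (i : 'I_N) := fun i0 => b i0 (+) (i0 == i).

Lemma synE b s : syn b s = \big[addb/false]_(i < N) (b i && odd (i.+1 %/ 2 ^ s)).
Proof. by rewrite ffunE; apply: eq_bigr => i _; rewrite ffunE. Qed.

Lemma hamE b : hamming_code b = (syn b == zv).
Proof.
apply/forallP/eqP => [H|H s].
  by apply/ffunP => s; rewrite [LHS]synE ffunE; apply/negbTE; apply: H.
by rewrite -synE H ffunE.
Qed.

Lemma syn_toggle b i : syn (toggle b i) = [ffun s => syn b s (+) col i s].
Proof.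
apply/ffunP => s; rewrite !ffunE.
under eq_bigr => i0 _ do rewrite /toggle andb_addl.
rewrite big_split /=; congr addb.
rewrite (bigD1 i) //= eqxx big1 ?addbF ?ffunE // => i0 /negbTE ->.
done.
Qed.

Lemma colI : injective col.
Proof.
move=> i i' /ffunP E; apply/val_inj/eq_add_S.
have lt (j : 'I_N) : j.+1 < 2 ^ W by rewrite -HW ltnS.
rewrite (bits_sum (lt i)) (bits_sum (lt i')).
by apply: eq_bigr => s _; move: (E s); rewrite !ffunE => ->.
Qed.

Lemma col_nz i : col i != zv.
Proof.
apply/eqP => /ffunP E.
have : i.+1 < 2 ^ W by rewrite -HW ltnS.
move/bits_sum; rewrite big1 // => s _.
by move: (E s); rewrite !ffunE => ->.
Qed.

Lemma col_surj v : v != zv -> exists i, v = col i.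
Proof.
move=> vnz.
have cI : #|[set col i | i : 'I_N]| = N by rewrite card_imset ?card_ord //; exact: colI.
have cD : #|[set~ zv]| = N.
  by rewrite cardsC1 card_ffun card_bool card_ord -HW.
have sub : [set col i | i : 'I_N] \subset [set~ zv].
  by apply/subsetP => x /imsetP[i _ ->]; rewrite !inE col_nz.
have := subset_cardP (etrans cI (esym cD)) sub.
move/(_ v); rewrite !inE vnz => /imsetP[i _ ->]; by exists i.
Qed.

Lemma cover b : hamming_code b \/ exists i, hamming_code (toggle b i).
Proof.
rewrite hamE; case: (eqVneq (syn b) zv) => [E|/col_surj[i E]]; first by left.
right; exists i; rewrite hamE syn_toggle E; apply/eqP/ffunP => s.
by rewrite !ffunE addbb.
Qed.

Lemma syn_toggle0 b i : hamming_code (toggle b i) -> syn b = col i.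
Proof.
rewrite hamE syn_toggle => /eqP/ffunP E; apply/ffunP => s.
move: (E s); rewrite !ffunE; case: (\big[addb/false]_(i0 < N) _); by case: odd.
Qed.

Lemma toggle_uniq b i i' : hamming_code (toggle b i) -> hamming_code (toggle b i') -> i = i'.
Proof. by move=> /syn_toggle0 E1 /syn_toggle0; rewrite E1 => /colI. Qed.

Lemma not_both b i : hamming_code b -> ~ hamming_code (toggle b i).
Proof.
rewrite hamE => /eqP H /syn_toggle0; rewrite H => E.
by move: (col_nz i); rewrite -E eqxx.
Qed.
End Ham.

Import GRing.Theory.
Local Open Scope ring_scope.

Lemma ham_ext N (b b' : 'I_N -> bool) : b =1 b' -> hamming_code b = hamming_code b'.
Proof.
move=> E; rewrite /hamming_code; apply: eq_forallb => s; congr negb.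
by apply: eq_bigr => i _; rewrite E.
Qed.

Section Main.
Variables (n k d : nat) (F : fieldType) (lam : 'I_n -> bool -> F) (H R : {set 'I_n}).
Variables (N : nat) (P : 'I_N -> {set 'I_n}) (m : 'I_N -> 'I_n).
Hypothesis HW : (N.+1 = 2 ^ hamming_w N)%N.
Hypothesis lamI : injective (fun p : 'I_n * bool => lam p.1 p.2).
Hypothesis cR : #|R| = d.
Hypothesis dHR : [disjoint H & R].
Hypothesis cP : forall i, #|P i| = (d - k)%N.
Hypothesis dP : forall i i', i != i' -> [disjoint P i & P i'].
Hypothesis bigP : \bigcup_i P i = H.
Hypothesis mP : forall i, m i \in P i.
Hypothesis hkd : (k < d)%N.

Definition bv (a : {ffun 'I_n -> bool}) := fun i => a (m i).

Lemma flip_m a i i0 : flip a (P i) (m i0) = a (m i0) (+) (i0 == i).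
Proof.
rewrite ffunE; congr addb; case: eqP => [->|/eqP ne]; first exact: mP.
by apply/negbTE; move: (dP ne); rewrite disjoint_sym => /disjointFl ->.
Qed.

Lemma ham_flip a i : hamming_code (bv (flip a (P i))) = hamming_code (toggle (bv a) i).
Proof. by apply: ham_ext => i0; rewrite /bv flip_m. Qed.

Lemma flipK i : involutive (fun a => flip a (P i)).
Proof. by move=> a; apply/ffunP => j; rewrite !ffunE addbK. Qed.

Lemma PH i : P i \subset H.
Proof. by rewrite -bigP; apply: bigcup_sup. Qed.

Lemma PiR i j : j \in P i -> j \notin R.
Proof.
move=> jP; have jH : j \in H by apply: (subsetP (PH i)).
by apply/negP => jR; move: dHR => /pred0P/(_ j); rewrite /= jH jR.
Qed.

Section Uniq.
Variable e : 'I_n -> {ffun 'I_n -> bool} -> F.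
Hypothesis ecode : in_hadamard_code k lam e.
Hypothesis eD : forall j' a' i, j' \in R -> hamming_code (bv a') ->
   e j' a' + e j' (flip a' (P i)) = 0.

Lemma sub0 a0 i : hamming_code (bv a0) ->
  (forall j, j \in P i -> e j a0 = 0 /\ e j (flip a0 (P i)) = 0) /\
  (forall j, j \notin P i -> j \notin R -> e j a0 + e j (flip a0 (P i)) = 0).
Proof.
move=> ha0; set a' := flip a0 (P i).
pose y (p : 'I_n * bool) := (if a0 p.1 == p.2 then e p.1 a0 else 0) +
   (if a' p.1 == p.2 then e p.1 a' else 0).
pose S := setX (P i) [set: bool] :|: [set (j, a0 j) | j in ~: (P i :|: R)].
have a'E j : a' j = a0 j (+) (j \in P i) by rewrite ffunE.
have y0 : forall p, y p = 0.
  apply: (vand (mu := fun p : 'I_n * bool => lam p.1 p.2) (S := S) (r := (n - k)%N)) => //.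
  - apply: leq_trans (leq_card_setU _ _) _.
    rewrite cardsX cardsT card_bool cP.
    have := leq_imset_card (fun j => (j, a0 j)) (~: (P i :|: R)).
    have := cardsC (P i :|: R); have := cardsUI (P i) R.
    have -> : P i :&: R = set0.
      apply/setP => j; rewrite !inE; apply/negbTE/negP => /andP[/PiR/negP]; done.
    rewrite cards0 card_ord cP cR => h1 h2 h3.
    move: h1 h2 h3; set u := #|P i :|: R|; set v := #|~: _|; set w := #|imset _ _|. move=> h1 h2 h3; clear -hkd h1 h2 h3. clearbody u v w. lia.
  - move=> [j b]; rewrite /S !inE /= andbT => /norP[jP].
    rewrite /y /= a'E (negbTE jP) addbF.
    case: (eqVneq (a0 j) b) => [<-|ne]; last by rewrite addr0.
    case: (boolP (j \in R)) => jR.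
      by move=> _; apply: eD.
    by move/negP; case; apply/imsetP; exists j; rewrite // !inE negb_or jP.
  - move=> t ltt.
    rewrite -(pair_bigA _ (fun j b => lam j b ^+ t * y (j, b))) /=.
    have Et := ecode a0 (Ordinal ltt); have Et' := ecode a' (Ordinal ltt).
    rewrite /= in Et Et'.
    transitivity (\sum_(j < n) (lam j (a0 j) ^+ t * e j a0 + lam j (a' j) ^+ t * e j a')); last by rewrite big_split /= Et Et' addr0.
    apply: eq_bigr => j _.
    rewrite big_bool /= /y /=.
    by case: (a0 j); case: (a' j); rewrite /= !mulrDr ?mulr0 ?addr0 ?add0r // addrC.
split.
  move=> j jP; have := y0 (j, a0 j); have := y0 (j, ~~ a0 j).
  by rewrite /y /= a'E jP; case: (a0 j); rewrite /= ?addr0 ?add0r => -> ->.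
move=> j jP jR; have := y0 (j, a0 j).
by rewrite /y /= a'E (negbTE jP) addbF eqxx.
Qed.

Lemma uniq0 j a : j \in H -> e j a = 0.
Proof.
rewrite -bigP => /bigcupP[i0 _ jP0].
case: (cover HW (bv a)) => [ha|[i hi]].
  by case: (sub0 i0 ha) => /(_ j jP0)[].
have ha0 : hamming_code (bv (flip a (P i))) by rewrite ham_flip.
have := sub0 i ha0; rewrite (flipK i a) => -[h1 h2].
case: (boolP (j \in P i)) => jPi; first by case: (h1 j jPi).
have := h2 j jPi (PiR jP0).
by case: (sub0 i0 ha0) => /(_ j jP0)[-> _]; rewrite add0r.
Qed.
End Uniq.
End Main.

Section Count.
Variables (n : nat) (N : nat) (P : 'I_N -> {set 'I_n}) (m : 'I_N -> 'I_n).
Hypothesis HW : (N.+1 = 2 ^ hamming_w N)%N.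
Hypothesis dP : forall i i', i != i' -> [disjoint P i & P i'].
Hypothesis mP : forall i, m i \in P i.

Lemma countC : (#|[set a : {ffun 'I_n -> bool} | hamming_code (fun i => a (m i))]| * N.+1 = 2 ^ n)%N.
Proof.
set C := [set a : {ffun 'I_n -> bool} | _].
pose phi (x : {ffun 'I_n -> bool} * option 'I_N) :=
  if x.2 is Some i then flip x.1 (P i) else x.1.
have hf := ham_flip (m := m) dP mP.
have fK := flipK P.
have inj : {in setX C [set: option 'I_N] &, injective phi}.
  move=> [a0 [i|]] [a1 [i'|]]; rewrite !inE /= !andbT => h0 h1; rewrite /phi /= => E.
  - have h0' : hamming_code (toggle (bv m (flip a0 (P i))) i) by rewrite -hf fK.
    have h1' : hamming_code (toggle (bv m (flip a0 (P i))) i') by rewrite -hf E fK.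
    have ii := toggle_uniq HW h0' h1'; subst i'.
    by rewrite -(fK i a0) E fK.
  - by exfalso; move: h1; rewrite -E (hf a0 i) => /(not_both HW h0).
  - by exfalso; move: h0; rewrite E (hf a1 i') => /(not_both HW h1).
  - by rewrite E.
have img : [set phi x | x in setX C [set: option 'I_N]] = setT.
  apply/setP => a; rewrite inE; apply/imsetP.
  case: (cover HW (bv m a)) => [ha|[i hi]].
    by exists (a, None); rewrite // !inE andbT.
  exists (flip a (P i), Some i); last by rewrite /phi /= fK.
  by rewrite !inE andbT hf.
have := card_in_imset inj; rewrite img cardsX !cardsT card_option card_ord.
by rewrite card_ffun card_bool card_ord => <-.
Qed.
End Count.


Definition rec_fn n k (F : finFieldType) (lam : 'I_n -> bool -> F) (R : {set 'I_n}) N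
  (P : 'I_N -> {set 'I_n}) (m : 'I_N -> 'I_n)
  (f : 'I_n -> {ffun 'I_n -> bool} -> 'I_N -> F) (j : 'I_n) (a : {ffun 'I_n -> bool}) : F :=
  match [pick cc : {ffun 'I_n -> {ffun {ffun 'I_n -> bool} -> F}} |
     [forall a0 : {ffun 'I_n -> bool}, forall t : 'I_(n - k),
        \sum_(j0 < n) lam j0 (a0 j0) ^+ t * cc j0 a0 == 0] &&
     [forall j0, forall a0 : {ffun 'I_n -> bool}, forall i,
        f j0 a0 i == (if (j0 \in R) && hamming_code (fun i0 => a0 (m i0))
                      then cc j0 a0 + cc j0 (flip a0 (P i)) else 0)]] with
  | Some cc => cc j a
  | None => 0
  end.
Unset Implicit Arguments.

Theorem theorem4 (n k h d : nat) (F : finFieldType) (lam : 'I_n -> bool -> F)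
  (H R : {set 'I_n}) (P : 'I_(h %/ (d - k)) -> {set 'I_n})
  (m : 'I_(h %/ (d - k)) -> 'I_n) :
  (1 <= k < n)%N ->
  (2 <= h <= n - k)%N ->
  (k < d <= n - h)%N ->
  (d - k %| h)%N ->
  ((h %/ (d - k)).+1 %| 2 ^ n)%N ->
  (2 * n < #|F|)%N ->
  injective (fun p : 'I_n * bool => lam p.1 p.2) ->
  #|H| = h -> #|R| = d -> [disjoint H & R] ->
  (forall i, #|P i| = (d - k)%N) ->
  (forall i i', i != i' -> [disjoint P i & P i']) ->
  \bigcup_i P i = H ->
  (forall i, m i \in P i) ->
  (exists rec : ('I_n -> {ffun 'I_n -> bool} -> 'I_(h %/ (d - k)) -> F) ->
                'I_n -> {ffun 'I_n -> bool} -> F,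
     forall c : 'I_n -> {ffun 'I_n -> bool} -> F,
       in_hadamard_code k lam c ->
       forall j, j \in H -> forall a,
         rec (fun j' a' i =>
                if (j' \in R) && hamming_code (fun i0 => a' (m i0))
                then c j' a' + c j' (flip a' (P i)) else 0) j a = c j a)
  /\ (#|[set a : {ffun 'I_n -> bool} | hamming_code (fun i => a (m i))]|
        * (h %/ (d - k)) * (d - k + h) = h * 2 ^ n)%N.
Proof.
move=> hk hh hd dvd dvN cF lamI cH cR dHR cP dP bigP mP.
have hkd : (k < d)%N by case/andP: hd.
have HW : ((h %/ (d - k)).+1 = 2 ^ hamming_w (h %/ (d - k)))%N.
  move: dvN; case/(dvdn_pfactor _ _ (isT : prime 2)) => e _ E.
  by rewrite /hamming_w E trunc_expnK.
split.
  exists (rec_fn k lam R P m) => c ccode j jH a.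
  rewrite /rec_fn; case: pickP => [cc /andP[/forallP cc1 /forallP cc2] | none].
    apply/eqP; rewrite eq_sym -subr_eq0; apply/eqP.
    apply: (uniq0 HW lamI cR dHR cP dP bigP mP hkd (e := fun j a => c j a - cc j a)) => //.
      move=> a0 t /=.
      under eq_bigr => j0 _ do rewrite mulrBr.
      rewrite sumrB ccode.
      by move/forallP: (cc1 a0) => /(_ t) /eqP ->; rewrite subr0.
    move=> j' a' i j'R ha.
    move/forallP: (cc2 j') => /(_ a') /forallP /(_ i).
    rewrite /= j'R ha /= => /eqP E.
    by rewrite addrACA -opprD E subrr.
  exfalso; move: (none [ffun j0 => [ffun a0 => c j0 a0]]) => /negbT/negP; apply.
  apply/andP; split.
    apply/forallP => a0; apply/forallP => t; apply/eqP.
    rewrite -[RHS](ccode a0 t); apply: eq_bigr => j0 _; by rewrite !ffunE.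
  apply/forallP => j0; apply/forallP => a0; apply/forallP => i; apply/eqP => /=.
  by rewrite !ffunE.
have := countC HW dP mP.
set c := #|_|.
have hN : h = (h %/ (d - k) * (d - k))%N by rewrite divnK.
move: hN; set N := (h %/ (d - k))%N; set dl := (d - k)%N => hN.
move=> <-; rewrite hN.
clearbody c N dl. clear -c. nia.
Qed.
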